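(* Let $k$ and $n$ be positive integers with $1 \leqslant k<n$. Suppose that there exists a prime $p>\max\{(k+2)(k+3)/2,\ 3k+8\}$ such that \[ \frac{n}{k+3}<p \leqslant \frac{n}{k+1}. \] Then for every $i\in\{1,2,\ldots,n\}$, the number \[ S(n,i,k)=\sum_{\substack{1 \leqslant i_1<i_2<\cdots<i_k \leqslant n,\\ i_j \neq i \text{ for } j=1,2,\ldots,k}} \frac{1}{i_1 i_2 \cdots i_k} \] is not an integer.
   Context: For integers $n,i,k$ with $1\leqslant k<n$ and $1\leqslant i\leqslant n$, $S(n,i,k)$ denotes the $k$-th elementary symmetric function of the $n-1$ numbers $\{1,1/2,\ldots,1/n\}\setminus\{1/i\}$. *)

(* Defs.v *)
From mathcomp Require Import all_boot all_order all_algebra.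
Set Implicit Arguments. Unset Strict Implicit. Unset Printing Implicit Defensive.
Import Order.TTheory GRing.Theory Num.Theory.
Local Open Scope ring_scope.

(* Indices j : 'I_n represent the integer j+1. The sum runs over all k-element
   subsets A of {1..n} not containing i, of 1 / prod_{a in A} a. *)
Definition Snik (n i k : nat) : rat :=
  \sum_(A : {set 'I_n} | (#|A| == k)%N && [forall j in A, (j.+1 != i)%N])
     (\prod_(j in A) (j.+1)%:R)^-1.

(* Main.v *)
Require Import Defs.
From mathcomp Require Import all_boot all_order all_algebra.
From mathcomp Require Import zify ring lra.
Set Implicit Arguments. Unset Strict Implicit. Unset Printing Implicit Defensive.
Import Order.TTheory GRing.Theory Num.Theory.
Lemma pair_id (T : finType) (M : {set T}) (q : T -> nat) :
  ((\sum_(B : {set T} | (B \subset M) && (#|B| == 2)) \prod_(j in B) q j) * 2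
   + \sum_(j in M) q j ^ 2 = (\sum_(j in M) q j) ^ 2)%N.
Proof.
have E1 : ((\sum_(j in M) q j) ^ 2 = \sum_(x in M) \sum_(y in M) q x * q y)%N.
  by rewrite expnS expn1 big_distrl /=; apply: eq_bigr => x _; rewrite big_distrr.
have E2 : (\sum_(x in M) \sum_(y in M) q x * q y =
   \sum_(x in M) q x ^ 2 + \sum_(x in M) \sum_(y in M | y != x) q x * q y)%N.
  rewrite -big_split /=; apply: eq_bigr => x xM.
  by rewrite (bigD1 x) //= expnS expn1.
rewrite E1 E2 addnC; congr (_ + _)%N.
rewrite pair_big_dep /=.
rewrite (partition_big (fun u : T * T => [set u.1; u.2])
   (fun B : {set T} => (B \subset M) && (#|B| == 2))) /=; last first.
  move=> [x y] /= /andP [xM /andP [yM yx]].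
  rewrite cards2 [x == y]eq_sym yx /= andbT; apply/subsetP => z.
  by rewrite in_set2 => /orP [] /eqP ->.
rewrite big_distrl /=; apply: eq_bigr => B /andP [BM /cards2P [a [b [ab EB]]]]; subst B.
have aM : a \in M by apply: (subsetP BM); apply: set21.
have bM : b \in M by apply: (subsetP BM); apply: set22.
rewrite (bigD1 (a, b)) /=; last by rewrite aM bM eq_sym ab eqxx.
rewrite (bigD1 (b, a)) /=; last first.
  rewrite bM aM ab /= setUC eqxx /=.
  by rewrite xpair_eqE negb_and ab orbT.
rewrite [X in _ = _ + (_ + X)]big_pred0; last first.
  move=> [x y] /=.
  apply/negP => /andP [/andP [/andP [/andP [xM /andP [yM yx]] /eqP Eq] n1] n2].
  have xi : x \in [set a; b] by rewrite -Eq !inE eqxx.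
  have yi : y \in [set a; b] by rewrite -Eq !inE eqxx orbT.
  move: xi yi n1 n2 yx; rewrite !inE.
  by case/orP => /eqP -> ; case/orP => /eqP ->; rewrite ?eqxx //=.
rewrite big_setU1 ?inE //= big_set1 addn0 mulnC. 
lia.
Qed.

Lemma sum_mult (p N : nat) (g : nat -> nat) : (0 < p)%N ->
  (\sum_(j < N | p %| j.+1) g (j.+1 %/ p) = \sum_(q < N %/ p) g q.+1)%N.
Proof.
move=> p0; rewrite -(big_mkord (fun j => p %| j.+1) (fun j => g (j.+1 %/ p))).
rewrite -(big_mkord xpredT (fun q => g q.+1)).
elim: N => [|N IH]; first by rewrite div0n !big_nil.
rewrite big_mkcond /= big_nat_recr //= -big_mkcond /= IH divnS //.
case: (p %| N.+1) => /=; last by rewrite addn0.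
by rewrite add1n big_nat_recr.
Qed.

Lemma sum_id m : ((\sum_(q < m) q.+1) * 2 = m * m.+1)%N.
Proof.
elim: m => [|m IH]; first by rewrite big_ord0.
rewrite big_ord_recr /= mulnDl IH; lia.
Qed.

Lemma sum_sq m : ((\sum_(q < m) q.+1 ^ 2) * 6 = m * m.+1 * (2 * m + 1))%N.
Proof.
elim: m => [|m IH]; first by rewrite big_ord0.
rewrite big_ord_recr /= mulnDl IH; lia.
Qed.

Lemma prod_ndvd (p : nat) (I : finType) (A : pred I) (F : I -> nat) :
  prime p -> (forall j, A j -> ~~ (p %| F j)) -> ~~ (p %| \prod_(j | A j) F j).
Proof.
move=> pp H; apply: (big_ind (fun x => ~~ (p %| x))) => //.
  by rewrite dvdn1; apply/eqP => p1; rewrite p1 in pp.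
by move=> x y hx hy; rewrite Euclid_dvdM // negb_or hx hy.
Qed.

Local Open Scope ring_scope.

Definition pint (p : nat) (x : rat) :=
  exists (a : int) (b : nat), ~~ (p %| b)%N /\ x = a%:~R / b%:R.
Definition ppint (p : nat) (x : rat) := exists y, pint p y /\ x = p%:R * y.

Lemma pint_add p x y : prime p -> pint p x -> pint p y -> pint p (x + y).
Proof.
move=> pp [a [b [hb ->]]] [c [d [hd ->]]].
exists (a * d%:Z + c * b%:Z), (b * d)%N; split.
  by rewrite Euclid_dvdM // negb_or hb hd.
have b0 : (b%:R : rat) != 0 by rewrite pnatr_eq0; apply: contraNneq hb => ->.
have d0 : (d%:R : rat) != 0 by rewrite pnatr_eq0; apply: contraNneq hd => ->.
rewrite natrM intrD !intrM /=. field. by rewrite b0 d0.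
Qed.

Lemma ppint_add p x y : prime p -> ppint p x -> ppint p y -> ppint p (x + y).
Proof.
move=> pp [x' [hx ->]] [y' [hy ->]]; exists (x' + y'); split.
  exact: pint_add.
by rewrite mulrDr.
Qed.

Lemma ppint_opp p x : ppint p x -> ppint p (- x).
Proof.
move=> [y [[a [b [hb ->]]] ->]]; exists ((- a)%:~R / b%:R); split.
  by exists (- a), b.
by rewrite intrN mulNr mulrN.
Qed.

Lemma ppint_sum p (I : finType) (P : pred I) (F : I -> rat) : prime p ->
  (forall A, P A -> ppint p (F A)) -> ppint p (\sum_(A | P A) F A).
Proof.
move=> pp H; apply: (big_ind (ppint p)) => //.
  exists 0; split; last by rewrite mulr0.
  exists 0, 1%N; split; last by rewrite mul0r.
  by rewrite dvdn1; apply/eqP => p1; rewrite p1 in pp.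
by move=> x y; apply: ppint_add.
Qed.

Lemma ppint_contra p (E P : nat) : prime p -> ~~ (p %| E)%N -> ~~ (p %| P)%N ->
  ppint p (E%:R / P%:R) -> False.
Proof.
move=> pp hE hP [y [[a [b [hb ->]]] Eq]].
have b0 : (b%:R : rat) != 0 by rewrite pnatr_eq0; apply: contraNneq hb => ->.
have P0 : (P%:R : rat) != 0 by rewrite pnatr_eq0; apply: contraNneq hP => ->.
have : ((E * b)%N%:~R : rat) = ((p * P)%N%:Z * a)%:~R.
  rewrite intrM -!pmulrn /= !natrM.
  move/(congr1 (fun t => t * P%:R * b%:R)): Eq.
  rewrite mulfVK //. move=> ->. field. by rewrite b0.
move/intr_inj/(congr1 absz); rewrite abszM /= => Eb.
have : (p %| E * b)%N by rewrite Eb -mulnA dvdn_mulr.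
by rewrite Euclid_dvdM // (negbTE hE) (negbTE hb).
Qed.

Lemma ordS_lt (i n : nat) : (1 <= i <= n)%N -> (i.-1 < n)%N.
Proof. lia. Qed.

Theorem lemma2p2 (n k : nat) :
  (1 <= k)%N -> (k < n)%N ->
  (exists p : nat,
      prime p /\
      ((k + 2) * (k + 3) < 2 * p)%N /\ (3 * k + 8 < p)%N /\
      (n < p * (k + 3))%N /\ (p * (k + 1) <= n)%N) ->
  forall i : nat, (1 <= i <= n)%N ->
    ~ (exists m : int, Snik n i k = m%:~R).
Proof.
move=> k1 kn [p [pp [h1 [h2 [h3 h4]]]]] i hi [z Hz].
have p0 : (0 < p)%N by apply: prime_gt0.
set m := (n %/ p)%N.
have mk1 : (k + 1 <= m)%N by rewrite leq_divRL // mulnC.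
have mk2 : (m <= k + 2)%N by rewrite -ltnS ltn_divLR //; lia.
have mp : (m < p)%N by lia.
pose qf (j : 'I_n) := (j.+1 %/ p)%N.
pose Mall := [set j : 'I_n | (p %| j.+1)%N].
pose j0 : 'I_n := Ordinal (ordS_lt hi).
pose Ms := Mall :\ j0.
have qP : forall j, j \in Mall -> [/\ j.+1 = (qf j * p)%N, (0 < qf j)%N & (qf j <= m)%N].
  move=> j; rewrite inE => pj; split.
  - by rewrite divnK.
  - by rewrite divn_gt0 // dvdn_leq.
  - by apply: leq_div2r; apply: ltn_ord.
have qndvd : forall j, j \in Mall -> ~~ (p %| qf j)%N.
  move=> j /qP [_ q0 qm]; apply/negP => /(dvdn_leq q0); lia.
have j0E : forall j : 'I_n, (j.+1 != i) = (j != j0).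
  move=> j; apply/idP/idP; apply: contra.
  - by move/eqP => ->; rewrite /= prednK //; move: (hi) => /andP [] .
  - by move/eqP => E; apply/eqP; apply: val_inj => /=; rewrite -E.
have cardMall : #|Mall| = m.
  have H := @sum_mult p n (fun _ => 1%N) p0; rewrite /= in H.
  rewrite /m -sum1_card -(card_ord (n %/ p)) -sum1_card -H.
  by apply: eq_bigl => j; rewrite inE.
have cardMs : #|Ms| = (m - (j0 \in Mall))%N by rewrite -cardMall (cardsD1 j0 Mall) addKn.
have MsMall : Ms \subset Mall by apply: subD1set.
have Msk : (k <= #|Ms|)%N by rewrite cardMs; case: (j0 \in Mall) => /=; lia.
set d := (#|Ms| - k)%N.
pose P := (\prod_(j in Ms) qf j)%N.
pose E := (\sum_(B : {set 'I_n} | (B \subset Ms) && (#|B| == d)) \prod_(j in B) qf j)%N.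
have PE : ~~ (p %| P)%N.
  by apply: prod_ndvd => // j jM; apply: qndvd; apply: (subsetP MsMall).
have sM : forall g : nat -> nat, (\sum_(j in Mall) g (qf j) = \sum_(q < m) g q.+1)%N.
  move=> g; rewrite -(@sum_mult p n g p0); apply: eq_bigl => j; by rewrite inE.
have sub_le : (\sum_(j in Ms) qf j <= \sum_(j in Mall) qf j)%N.
  by rewrite [X in (_ <= X)%N](big_setID Ms) /= (setIidPr MsMall) leq_addr.
have s1 : ((\sum_(j in Mall) qf j) * 2 = m * m.+1)%N.
  by rewrite (sM id) sum_id.
have s2 : ((\sum_(j in Mall) qf j ^ 2) * 6 = m * m.+1 * (2 * m + 1))%N.
  by rewrite (sM (fun x => x ^ 2)%N) sum_sq.
have cM : (#|Ms| <= m)%N by rewrite cardMs leq_subr.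
have cM2 : (m - 1 <= #|Ms|)%N by rewrite cardMs; case: (j0 \in Mall) => /=; lia.
have pnd : forall x, (0 < x < p)%N -> ~~ (p %| x)%N.
  move=> x /andP [x0 xp]; apply/negP => /(dvdn_leq x0); lia.
have EE : ~~ (p %| E)%N.
  have : (d = 0 \/ d = 1 \/ d = 2)%N by rewrite /d; lia.
  case=> [hd|[hd|hd]].
  - have -> : E = 1%N.
      rewrite /E hd (big_pred1 set0) ?big_set0 // => B.
      rewrite cards_eq0 /=; case: eqP => [->|]; by rewrite ?sub0set ?andbF.
    by rewrite dvdn1; apply/eqP => p1; rewrite p1 in pp.
  - have E1 : E = (\sum_(x in Ms) qf x)%N.
      rewrite /E hd.
      transitivity (\sum_(B in [set [set x] | x in Ms]) \prod_(j in B) qf j)%N.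
        apply: eq_bigl => B; apply/andP/imsetP.
          by case=> BM /cards1P [x Bx]; exists x => //; rewrite -sub1set -Bx.
        by case=> x xM ->; rewrite sub1set xM cards1.
      rewrite big_imset /=; last by move=> x y _ _; apply: set1_inj.
      by apply: eq_bigr => x _; rewrite big_set1.
    have : (0 < #|Ms|)%N by rewrite /d in hd; lia.
    rewrite card_gt0 => /set0Pn [x xM].
    apply: pnd; apply/andP; split.
      rewrite E1 (bigD1 x) //=; apply: leq_trans (leq_addr _ _).
      by have [_ q0 _] := qP x (subsetP MsMall x xM).
    rewrite E1; have : (m * m.+1 <= (k + 2) * (k + 3))%N by apply: leq_mul; lia.
    move: sub_le s1 h1; clear; nia.
  - have MsE : Ms = Mall.
      have j0n : j0 \notin Mall.
        apply/negP => j0M; move: cardMs; rewrite j0M /d in hd *; lia.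
      apply/setP => j; rewrite /Ms in_setD1; case: eqP => // ->.
      by rewrite (negbTE j0n).
    have mE : m = (k + 2)%N by rewrite /d MsE cardMall in hd; lia.
    have HE : (E * 2 + \sum_(j in Ms) qf j ^ 2 = (\sum_(j in Ms) qf j) ^ 2)%N by rewrite /E hd; apply: pair_id.
    rewrite MsE in HE.
    have E24 : (E * 24 = (k + 1) * (k + 2) * (k + 3) * (3 * k + 8))%N.
      move: HE s1 s2; rewrite mE; move: (\sum_(j in Mall) qf j)%N (\sum_(j in Mall) qf j ^ 2)%N.
      clear; move=> a b; nia.
    apply/negP => pE.
    have : (p %| (k + 1) * (k + 2) * (k + 3) * (3 * k + 8))%N by rewrite -E24 dvdn_mulr.
    rewrite !Euclid_dvdM // (negbTE (pnd _ _)); last by apply/andP; split; lia.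
    rewrite (negbTE (pnd _ _)); last by apply/andP; split; lia.
    rewrite (negbTE (pnd _ _)); last by apply/andP; split; lia.
    rewrite (negbTE (pnd _ _)) //; by apply/andP; split; lia.
pose t (A : {set 'I_n}) := (p%:R ^+ k * (\prod_(j in A) (j.+1)%:R)^-1 : rat).
have main : \sum_(A : {set 'I_n} | ((#|A| == k) && [forall j in A, (j.+1 != i)%N]) && (A \subset Ms)) t A
   = E%:R / P%:R.
  have DD : forall B : {set 'I_n}, Ms :\: (Ms :\: B) = Ms :&: B.
    by move=> B; rewrite setDDr setDv set0U.
  have P0 : (P%:R : rat) != 0 by rewrite pnatr_eq0; apply: contraNneq PE => ->.
  have pn0 : (p%:R : rat) != 0 by rewrite pnatr_eq0 -lt0n.
  rewrite (eq_bigl (fun A : {set 'I_n} => (A \subset Ms) && (#|A| == k))); last first.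
    move=> A; case AM: (A \subset Ms); rewrite ?andbF ?andbT //= andbC.
    case: (#|A| == k); rewrite ?andbF ?andbT //; apply/forall_inP => j jA.
    have := subsetP AM j jA; rewrite /Ms !inE j0E => /andP [] //.
  rewrite (eq_bigr (fun A => (\prod_(j in Ms :\: A) qf j)%:R / P%:R)); last first.
    move=> A /andP [AM /eqP cA].
    have pA : (\prod_(j in A) j.+1 = (\prod_(j in A) qf j) * p ^ k)%N.
      rewrite -cA -prod_nat_const -big_split /=; apply: eq_bigr => j jA.
      by have [-> _ _] := qP j (subsetP MsMall j (subsetP AM j jA)).
    have PA : (P = (\prod_(j in A) qf j) * \prod_(j in Ms :\: A) qf j)%N.
      by rewrite /P (big_setID A) /= (setIidPr AM).
    have X0 : ((\prod_(j in A) qf j)%N%:R : rat) != 0.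
      by apply: contraTneq P0 => /eqP; rewrite PA natrM => /eqP ->; rewrite mul0r.
    have Y0 : ((\prod_(j in Ms :\: A) qf j)%N%:R : rat) != 0.
      by apply: contraTneq P0 => /eqP; rewrite PA natrM => /eqP ->; rewrite mulr0.
    rewrite /t -natr_prod pA PA !natrM natrX.
    field. by rewrite X0 Y0 expf_neq0.
  rewrite -mulr_suml -natr_sum; congr (_%:R / _).
  rewrite (reindex_onto (fun B => Ms :\: B) (fun B => Ms :\: B)) /=; last first.
    by move=> A /andP [AM _]; rewrite DD (setIidPr AM).
  rewrite /E; apply: eq_big => B.
    rewrite subsetDl DD /=.
    case BM: (B \subset Ms); last first.
      rewrite /=; apply/negbTE; apply: contraFN BM => /andP [_ /eqP <-].
      exact: subsetIl.
    rewrite (setIidPr BM) eqxx andbT /d cardsD (setIidPr BM) /=.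
    move: (subset_leq_card BM) Msk; clear; move: #|B| #|Ms| => x y h h'; apply/idP/idP => /eqP H; apply/eqP; lia.
  by move=> /andP [_ /eqP ->].
have rest : ppint p (\sum_(A : {set 'I_n} | ((#|A| == k) && [forall j in A, (j.+1 != i)%N]) && ~~ (A \subset Ms)) t A).
  apply: ppint_sum => // A /andP [/andP [/eqP cA /forall_inP fA] nA].
  set tt := #|A :&: Ms|.
  have ttk : (tt < k)%N.
    have := cardsID Ms A; rewrite -/tt cA.
    have : (0 < #|A :\: Ms|)%N by rewrite card_gt0 setD_eq0.
    by move=> a b; rewrite -b -[X in (X < _)%N]addn0 ltn_add2l.
  pose c := ((\prod_(j in A :&: Ms) qf j) * \prod_(j in A :\: Ms) j.+1)%N.
  have cP : ~~ (p %| c)%N.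
    rewrite Euclid_dvdM // negb_or; apply/andP; split; apply: prod_ndvd => // j.
      by rewrite inE => /andP [_ jM]; apply: qndvd; apply: (subsetP MsMall).
    rewrite inE => /andP [jM jA].
    move: jM; rewrite /Ms !inE negb_and negbK.
    have := fA j jA; rewrite j0E => /negbTE -> /=.
    by [].
  have prodE : (\prod_(j in A) j.+1 = c * p ^ tt)%N.
    rewrite (big_setID Ms) /= /c mulnAC; congr (_ * _)%N.
    rewrite -prod_nat_const -big_split /=; apply: eq_bigr => j.
    by rewrite inE => /andP [_ /(subsetP MsMall) /qP [-> _ _]].
  have pkE : (p ^ k = p * p ^ (k - tt.+1) * p ^ tt)%N.
    by rewrite -expnS -expnD; congr (_ ^ _)%N; move: ttk; clear; lia.
  exists ((Posz (p ^ (k - tt.+1))%N)%:~R / c%:R); split.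
    by exists (Posz (p ^ (k - tt.+1))%N), c.
  have c0 : (c%:R : rat) != 0 by rewrite pnatr_eq0; apply: contraNneq cP => ->.
  have pn0 : (p%:R : rat) != 0 by rewrite pnatr_eq0 -lt0n.
  rewrite /t -natrX -natr_prod prodE pkE -pmulrn !natrM !natrX.
  field. move: c0; rewrite /c natrM mulf_eq0 negb_or => /andP [c1 c2].
  by rewrite c1 c2 expf_neq0.
have tot : p%:R ^+ k * Snik n i k = E%:R / P%:R + \sum_(A : {set 'I_n} | ((#|A| == k) && [forall j in A, (j.+1 != i)%N]) && ~~ (A \subset Ms)) t A.
  by rewrite -main /Snik mulr_sumr (bigID (fun A : {set 'I_n} => A \subset Ms)).
have hz : ppint p (p%:R ^+ k * z%:~R).
  exists (Posz (p ^ k.-1)%N * z)%:~R; split.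
    exists (Posz (p ^ k.-1)%N * z), 1%N; split; last by rewrite divr1.
    by rewrite dvdn1; apply/eqP => p1; rewrite p1 in pp.
  by rewrite intrM -pmulrn natrX mulrA -exprS prednK.
apply: (ppint_contra pp EE PE).
have -> : E%:R / P%:R = p%:R ^+ k * z%:~R + - (\sum_(A : {set 'I_n} | ((#|A| == k) && [forall j in A, (j.+1 != i)%N]) && ~~ (A \subset Ms)) t A).
  by rewrite -Hz tot addrK.
by apply: ppint_add => //; apply: ppint_opp.
Qed.
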